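(* Let $d\ge1$, $n\ge2$, $N\ge1$, $L>0$, $h=L/N$, $\Delta t>0$, and let $b_{ij}>0$ with $b_{ij}=b_{ji}$ for $i\neq j$. Let $\rho^k$ be an $n$-tuple of cell-centered grid functions on the $d$-dimensional periodic grid with $\rho^k_{i,\ell}>0$ and $\sum_{i=1}^n\rho^k_{i,\ell}=1$ for all $i,\ell$. Then there exists $\delta_0>0$ such that for every $0<\delta\le\delta_0$: a cell-centered $n$-tuple $\rho^{k+1}$ with $\rho^{k+1}_{i,\ell}>0$ for all $i,\ell$ is a solution of the scheme (i.e. there is an edge-centered $n$-tuple $v^{k+1}$ with, for $i=1,\dots,n$, $$\frac{\rho^{k+1}_i-\rho^k_i}{\Delta t}+d_h(\hat\rho^k_iv^{k+1}_i)=0\ \text{at cell points},\quad -\sum_{j=1}^nb_{ij}\hat\rho^k_j(v^{k+1}_i-v^{k+1}_j)=D_h\log\rho^{k+1}_i-\frac{\sum_{j=1}^n\hat\rho^k_jD_h\log\rho^{k+1}_j}{\sum_{j=1}^n\hat\rho^k_j},\quad\sum_{j=1}^n\hat\rho^k_jv^{k+1}_j=0\ \text{at edge points})$$ if and only if $\rho^{k+1}$ is the $\rho$-component of a minimizer over $K_\delta$ of $$J(\rho,w)=\frac{1}{4\Delta t}\,h^d\sum_{\text{edge points }e}\sum_{i,j=1}^nb_{ij}\hat\rho^k_{i,e}\hat\rho^k_{j,e}(w_{i,e}-w_{j,e})^2+h^d\sum_{\ell\in\{1,\dots,N\}^d}\sum_{i=1}^n\rho_{i,\ell}\log\rho_{i,\ell},$$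 where $K_\delta$ is the set of pairs $(\rho,w)$, $\rho$ a cell-centered and $w$ an edge-centered $n$-tuple, with $\rho_{i,\ell}\ge\delta$, $\rho_{i,\ell}-\rho^k_{i,\ell}+(d_h(\hat\rho^k_iw_i))_\ell=0$, $\sum_{i=1}^n\rho_{i,\ell}=1$ for all $i$ and $\ell\in\{1,\dots,N\}^d$, and $\sum_{i=1}^n\hat\rho^k_{i,e}w_{i,e}=0$ at every edge point $e$.
   Context: Multidimensional periodic grid: cell points $\ell=(\ell_1,\dots,\ell_d)\in\mathbb Z^d$ modulo $N$ in each coordinate; edge points $\ell+\frac12e_s$, $s=1,\dots,d$, $N$-periodic. $(D_hf)_{\ell+\frac12e_s}=(f_{\ell+e_s}-f_\ell)/h$; $(d_h\phi)_\ell=\sum_{s=1}^d(\phi_{\ell+\frac12e_s}-\phi_{\ell-\frac12e_s})/h$; $\hat f_{\ell+\frac12e_s}=(f_\ell+f_{\ell+e_s})/2$. Products and logarithms are pointwise; terms with $i=j$ vanish so $b_{ii}$ is irrelevant. *)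

(* Defs.v *)
From HB Require Import structures.
From mathcomp Require Import all_boot all_order all_algebra.
From mathcomp Require Import all_classical all_reals all_analysis.
Set Implicit Arguments. Unset Strict Implicit. Unset Printing Implicit Defensive.
Import Order.TTheory GRing.Theory Num.Theory.
Local Open Scope ring_scope.

(* Periodic d-dimensional grid with N points per direction:
   cell points l in (Z/NZ)^d, represented as functions 'I_d -> 'I_N
   (coordinates taken modulo N, indices 0..N-1 instead of 1..N).
   The edge point l + 1/2 e_s is represented by the pair (l, s). *)
Definition cell (d N : nat) := {ffun 'I_d -> 'I_N}.

Definition shiftp (d N : nat) (l : cell d N) (s : 'I_d) : cell d N :=
  [ffun t => if t == s then ordS (l t) else l t].
Definition shiftm (d N : nat) (l : cell d N) (s : 'I_d) : cell d N :=
  [ffun t => if t == s then ord_pred (l t) else l t].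

Section Ops.
Variables (R : realType) (d N : nat) (h : R).

Definition Dh (f : cell d N -> R) : cell d N -> 'I_d -> R :=
  fun l s => (f (shiftp l s) - f l) / h.

Definition dh (phi : cell d N -> 'I_d -> R) : cell d N -> R :=
  fun l => \sum_(s < d) (phi l s - phi (shiftm l s) s) / h.

Definition hat (f : cell d N -> R) : cell d N -> 'I_d -> R :=
  fun l s => (f l + f (shiftp l s)) / 2.

Variables (n : nat) (dt : R) (b : 'I_n -> 'I_n -> R)
          (rk : 'I_n -> cell d N -> R).

Definition scheme_solution (r1 : 'I_n -> cell d N -> R) : Prop :=
  exists v : 'I_n -> cell d N -> 'I_d -> R,
    (forall i l, (r1 i l - rk i l) / dt
                 + dh (fun l' s => hat (rk i) l' s * v i l' s) l = 0) /\
    (forall i l s,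
        - (\sum_(j < n) b i j * hat (rk j) l s * (v i l s - v j l s))
        = Dh (fun l' => ln (r1 i l')) l s
          - (\sum_(j < n) hat (rk j) l s * Dh (fun l' => ln (r1 j l')) l s)
            / (\sum_(j < n) hat (rk j) l s)) /\
    (forall l s, \sum_(j < n) hat (rk j) l s * v j l s = 0).

Definition Kdelta (delta : R) (r : 'I_n -> cell d N -> R)
    (w : 'I_n -> cell d N -> 'I_d -> R) : Prop :=
  (forall i l, delta <= r i l) /\
  (forall i l, r i l - rk i l
               + dh (fun l' s => hat (rk i) l' s * w i l' s) l = 0) /\
  (forall l, \sum_(i < n) r i l = 1) /\
  (forall l s, \sum_(i < n) hat (rk i) l s * w i l s = 0).

Definition Jfun (r : 'I_n -> cell d N -> R)
    (w : 'I_n -> cell d N -> 'I_d -> R) : R :=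
  (4 * dt)^-1 * h ^+ d *
    (\sum_(l : cell d N) \sum_(s < d) \sum_(i < n) \sum_(j < n)
       b i j * hat (rk i) l s * hat (rk j) l s * (w i l s - w j l s) ^+ 2)
  + h ^+ d * (\sum_(l : cell d N) \sum_(i < n) r i l * ln (r i l)).

Definition is_minimizer (delta : R) (r : 'I_n -> cell d N -> R)
    (w : 'I_n -> cell d N -> 'I_d -> R) : Prop :=
  Kdelta delta r w /\
  forall r' w', Kdelta delta r' w' -> Jfun r w <= Jfun r' w'.

End Ops.

(* Main.v *)
Require Import Defs.
From HB Require Import structures.
From mathcomp Require Import all_boot all_order all_algebra.
From mathcomp Require Import all_classical all_reals all_analysis.
From mathcomp Require Import ring lra.
Import Order.TTheory GRing.Theory Num.Theory.
Set Implicit Arguments. Unset Strict Implicit. Unset Printing Implicit Defensive.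
Local Open Scope ring_scope.

Section Aux.
Variable R : realType.

Lemma ln_le_sub1 (z : R) : 0 < z -> ln z <= z - 1.
Proof.
move=> z0; have := @le_ln1Dx R (z - 1); rewrite addrCA subrr addr0; apply; lra.
Qed.

Lemma xlnx_lower (x y : R) : 0 < x -> 0 < y ->
  x * ln x + (ln x + 1) * (y - x) <= y * ln y.
Proof.
move=> x0 y0.
have h1 : ln (x / y) <= x / y - 1 by apply: ln_le_sub1; exact: divr_gt0.
have e : ln (x / y) = ln x - ln y by rewrite ln_div // posrE.
rewrite e in h1.
have : y * (ln x - ln y) <= y * (x / y - 1) by rewrite ler_pM2l.
have -> : y * (x / y - 1) = x - y by field; rewrite gt_eqF.
nra.
Qed.

Lemma xlnx_upper (x y : R) : 0 < x -> 0 < y ->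
  y * ln y <= x * ln x + (ln x + 1) * (y - x) + (y - x) ^+ 2 / x.
Proof.
move=> x0 y0.
have h1 : ln (y / x) <= y / x - 1 by apply: ln_le_sub1; exact: divr_gt0.
have e : ln (y / x) = ln y - ln x by rewrite ln_div // posrE.
rewrite e in h1.
have : y * (ln y - ln x) <= y * (y / x - 1) by rewrite ler_pM2l.
have -> : y * (y / x - 1) = (y - x) + (y - x) ^+ 2 / x by field; rewrite gt_eqF.
nra.
Qed.

Lemma mxlnx_le1 (x : R) : 0 < x -> - (x * ln x) <= 1.
Proof.
move=> x0; have : 0 < x^-1 by rewrite invr_gt0.
move=> /ln_le_sub1.
rewrite lnV ?posrE // => h.
have : x * (- ln x) <= x * (x^-1 - 1) by rewrite ler_pM2l.
have -> : x * (x^-1 - 1) = 1 - x by field; rewrite gt_eqF.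
nra.
Qed.

Lemma small_t_nonneg (t0 a c : R) : 0 < t0 ->
  (forall t, 0 < t -> t <= t0 -> 0 <= t * a + t ^+ 2 * c) -> 0 <= a.
Proof.
move=> t00 H; rewrite leNgt; apply/negP => a0.
set k := `|c| + 1.
have k0 : 0 < k by rewrite /k; have := normr_ge0 c; lra.
set t := Num.min t0 ((- a) / (2 * k)).
have tp : 0 < t by rewrite /t lt_min t00 /= divr_gt0 //; lra.
have tt0 : t <= t0 by rewrite /t ge_min lexx.
have tk : t <= (- a) / (2 * k) by rewrite /t ge_min lexx orbT.
have tk2 : 2 * k * t <= - a.
  by rewrite -ler_pdivlMl ?mulr_gt0 // mulrC.
have ck : c <= k by rewrite /k; have := real_ler_norm (num_real c); lra.
have h1 : t ^+ 2 * c <= t ^+ 2 * k by rewrite ler_wpM2l // sqr_ge0.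
have h2 : t * (2 * k * t) <= t * (- a) by rewrite ler_wpM2l // ltW.
have := H t tp tt0.
have h3 : 0 < t * (- a) by rewrite mulr_gt0 //; lra.
rewrite expr2 in h1 *; nra.
Qed.

Lemma small_t_zero (t0 a c : R) : 0 < t0 ->
  (forall t, `|t| <= t0 -> 0 <= t * a + t ^+ 2 * c) -> a = 0.
Proof.
move=> t00 H; apply/eqP; rewrite eq_le; apply/andP; split; last first.
  apply: (small_t_nonneg t00) => t tp tt0; apply: H; rewrite ger0_norm //; exact: ltW.
rewrite -oppr_ge0; apply: (small_t_nonneg (c := c) t00) => t tp tt0.
have := H (- t); rewrite normrN ger0_norm; last exact: ltW.
move=> /(_ tt0).
by rewrite sqrrN mulNr mulrN.
Qed.

Lemma sum_ind (I : finType) (F : I -> R) i0 :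
  \sum_i (i == i0)%:R * F i = F i0.
Proof.
rewrite (bigD1 i0) //= eqxx mul1r big1 ?addr0 // => i /negbTE ->.
by rewrite mul0r.
Qed.

End Aux.

Section Sums.
Variable R : realType.

Lemma sum2_lin (I1 I2 : finType) (A B C : I1 -> I2 -> R) a c :
  \sum_x \sum_y (A x y + a * B x y + c * C x y) =
  \sum_x \sum_y A x y + a * \sum_x \sum_y B x y + c * \sum_x \sum_y C x y.
Proof.
rewrite !mulr_sumr -!big_split /=; apply: eq_bigr => x _.
by rewrite !mulr_sumr -!big_split.
Qed.

Lemma sum3_lin (I1 I2 I3 : finType) (A B C : I1 -> I2 -> I3 -> R) a c :
  \sum_x \sum_y \sum_z (A x y z + a * B x y z + c * C x y z) =
  \sum_x \sum_y \sum_z A x y z + a * \sum_x \sum_y \sum_z B x y z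
  + c * \sum_x \sum_y \sum_z C x y z.
Proof.
rewrite !mulr_sumr -!big_split /=; apply: eq_bigr => x _.
by rewrite sum2_lin.
Qed.

Lemma sum4_lin (I1 I2 I3 I4 : finType) (A B C : I1 -> I2 -> I3 -> I4 -> R) a c :
  \sum_x \sum_y \sum_z \sum_u (A x y z u + a * B x y z u + c * C x y z u) =
  \sum_x \sum_y \sum_z \sum_u A x y z u + a * \sum_x \sum_y \sum_z \sum_u B x y z u
  + c * \sum_x \sum_y \sum_z \sum_u C x y z u.
Proof.
rewrite !mulr_sumr -!big_split /=; apply: eq_bigr => x _.
by rewrite sum3_lin.
Qed.

Lemma le_sum2 (I1 I2 : finType) (A B : I1 -> I2 -> R) :
  (forall x y, A x y <= B x y) -> \sum_x \sum_y A x y <= \sum_x \sum_y B x y.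
Proof. by move=> H; apply: ler_sum => x _; apply: ler_sum => y _. Qed.

Lemma le_sum4 (I1 I2 I3 I4 : finType) (A B : I1 -> I2 -> I3 -> I4 -> R) :
  (forall x y z u, A x y z u <= B x y z u) ->
  \sum_x \sum_y \sum_z \sum_u A x y z u <= \sum_x \sum_y \sum_z \sum_u B x y z u.
Proof.
by move=> H; apply: ler_sum => x _; apply: ler_sum => y _;
   apply: ler_sum => z _; apply: ler_sum => u _.
Qed.

Lemma single_le_sum (I : finType) (F : I -> R) i0 :
  (forall i, 0 <= F i) -> F i0 <= \sum_i F i.
Proof.
move=> H; rewrite (bigD1 i0) //= lerDl; apply: sumr_ge0 => i _; exact: H.
Qed.

Lemma sum_le_single (I : finType) (F : I -> R) i0 :
  (forall i, F i <= 0) -> \sum_i F i <= F i0.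
Proof.
move=> H; rewrite (bigD1 i0) //= gerDl; apply: sumr_le0 => i _; exact: H.
Qed.

Lemma pos_lb (I1 I2 : finType) (f : I1 -> I2 -> R) :
  (forall x y, 0 < f x y) -> exists c, 0 < c /\ forall x y, c <= f x y.
Proof.
move=> fp; set S := \sum_x \sum_y (f x y)^-1.
have S0 : 0 <= S by apply: sumr_ge0 => x _; apply: sumr_ge0 => y _;
  rewrite invr_ge0 ltW.
exists (1 + S)^-1; split; first by rewrite invr_gt0; lra.
move=> x y.
have h1 : (f x y)^-1 <= S.
  apply: (@le_trans _ _ (\sum_y (f x y)^-1)).
    by apply: single_le_sum => y'; rewrite invr_ge0 ltW.
  rewrite /S. have := @single_le_sum _ (fun x => \sum_y (f x y)^-1) x. apply=> x'.
  by apply: sumr_ge0 => y' _; rewrite invr_ge0 ltW.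
have fxy := fp x y.
rewrite -(invrK (f x y)) lef_pV2 ?posrE ?invr_gt0 //; lra.
Qed.

End Sums.

Section Grid.
Variables (R : realType) (d N : nat) (h : R).
Local Notation cellT := (cell d N).

Lemma shiftmpK (s : 'I_d) : cancel (fun l : cellT => shiftp l s) (fun l => shiftm l s).
Proof.
move=> l; apply/ffunP => t; rewrite !ffunE.
by case: eqP => [->|_]; rewrite ?ordSK.
Qed.

Lemma dh_ext (phi psi : cellT -> 'I_d -> R) l :
  (forall l s, phi l s = psi l s) -> dh h phi l = dh h psi l.
Proof. by move=> H; rewrite /dh; apply: eq_bigr => s _; rewrite !H. Qed.

Lemma dh_lin2 (phi psi : cellT -> 'I_d -> R) a c l :
  dh h (fun l s => a * phi l s + c * psi l s) l = a * dh h phi l + c * dh h psi l.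
Proof.
rewrite /dh !mulr_sumr -big_split /=; apply: eq_bigr => s _; ring.
Qed.

Lemma dh_sum n (phi : 'I_n -> cellT -> 'I_d -> R) l :
  \sum_i dh h (phi i) l = dh h (fun l s => \sum_i phi i l s) l.
Proof.
rewrite /dh exchange_big /=; apply: eq_bigr => s _.
by rewrite -mulr_suml sumrB.
Qed.

Lemma dh0 l : dh h (fun (_ : cellT) (_ : 'I_d) => 0) l = 0.
Proof. by rewrite /dh big1 // => s _; rewrite subrr mul0r. Qed.

Lemma sum_by_parts (f : cellT -> R) (phi : cellT -> 'I_d -> R) :
  \sum_l f l * dh h phi l = - \sum_l \sum_s phi l s * Dh h f l s.
Proof.
rewrite /dh /Dh.
under eq_bigr do rewrite mulr_sumr.
rewrite exchange_big /= [X in - X]exchange_big /= -sumrN.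
apply: eq_bigr => s _.
have inj : injective (fun l : cellT => shiftp l s) := can_inj (@shiftmpK s).
have E : \sum_l f l * phi (shiftm l s) s / h
       = \sum_l f (shiftp l s) * phi l s / h.
  rewrite (reindex_inj inj) /=; apply: eq_bigr => l _; by rewrite shiftmpK.
transitivity (\sum_l f l * phi l s / h - \sum_l f l * phi (shiftm l s) s / h).
  by rewrite -sumrB; apply: eq_bigr => l _; ring.
by rewrite E -sumrB -sumrN; apply: eq_bigr => l _; ring.
Qed.

End Grid.

Section Model.
Variables (R : realType) (d N : nat) (h : R) (n : nat) (dt : R)
  (b : 'I_n -> 'I_n -> R) (rk : 'I_n -> cell d N -> R).
Local Notation cellT := (cell d N).
Local Notation rh i l s := (hat (rk i) l s).

Definition Feas (r : 'I_n -> cellT -> R) (w : 'I_n -> cellT -> 'I_d -> R) :=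
  (forall i l, r i l - rk i l + dh h (fun l' s => rh i l' s * w i l' s) l = 0) /\
  (forall l, \sum_(i < n) r i l = 1) /\
  (forall l s, \sum_(i < n) rh i l s * w i l s = 0).

Definition Ker (r : 'I_n -> cellT -> R) (w : 'I_n -> cellT -> 'I_d -> R) :=
  (forall i l, r i l + dh h (fun l' s => rh i l' s * w i l' s) l = 0) /\
  (forall l, \sum_(i < n) r i l = 0) /\
  (forall l s, \sum_(i < n) rh i l s * w i l s = 0).

Lemma feas_move r w dr dw t : Feas r w -> Ker dr dw ->
  Feas (fun i l => r i l + t * dr i l) (fun i l s => w i l s + t * dw i l s).
Proof.
move=> [F1 [F2 F3]] [K1 [K2 K3]]; split; [|split].
- move=> i l.
  rewrite (@dh_ext _ _ _ _ _ (fun l' s => t * (rh i l' s * dw i l' s)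
              + 1 * (rh i l' s * w i l' s))); last by move=> l' s; ring.
  rewrite dh_lin2; have := F1 i l; have := congr1 (fun z => t * z) (K1 i l); rewrite /= mulr0; lra.
- move=> l; rewrite big_split /= -mulr_sumr F2 K2; ring.
- move=> l s.
  under eq_bigr do rewrite mulrDr.
  rewrite big_split /= F3.
  under eq_bigr do rewrite mulrCA.
  by rewrite -mulr_sumr K3 mulr0 addr0.
Qed.

Lemma ker_diff r w r' w' : Feas r w -> Feas r' w' ->
  Ker (fun i l => r' i l - r i l) (fun i l s => w' i l s - w i l s).
Proof.
move=> [F1 [F2 F3]] [G1 [G2 G3]]; split; [|split].
- move=> i l.
  rewrite (@dh_ext _ _ _ _ _ (fun l' s => 1 * (rh i l' s * w' i l' s)
              + (-1) * (rh i l' s * w i l' s))); last by move=> l' s; ring.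
  rewrite dh_lin2; have := F1 i l; have := G1 i l; lra.
- by move=> l; rewrite sumrB F2 G2 subrr.
- move=> l s.
  under eq_bigr do rewrite mulrBr.
  by rewrite sumrB F3 G3 subrr.
Qed.

Lemma feas_rk (hrk : forall l, \sum_(i < n) rk i l = 1) :
  Feas rk (fun _ _ _ => 0).
Proof.
split; [|split].
- move=> i l; rewrite subrr add0r.
  rewrite (@dh_ext _ _ _ _ _ (fun _ _ => 0)) ?dh0 // => l' s; ring.
- exact: hrk.
- by move=> l s; rewrite big1 // => i _; rewrite mulr0.
Qed.

Definition Qf (w : 'I_n -> cellT -> 'I_d -> R) :=
  \sum_(l : cellT) \sum_(s < d) \sum_(i < n) \sum_(j < n)
       b i j * rh i l s * rh j l s * (w i l s - w j l s) ^+ 2.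
Definition Bf (w x : 'I_n -> cellT -> 'I_d -> R) :=
  \sum_(l : cellT) \sum_(s < d) \sum_(i < n) \sum_(j < n)
       b i j * rh i l s * rh j l s * (2 * (w i l s - w j l s) * (x i l s - x j l s)).
Definition Ef (r : 'I_n -> cellT -> R) :=
  \sum_(l : cellT) \sum_(i < n) r i l * ln (r i l).

Lemma J_eq r w : Jfun h dt b rk r w = (4 * dt)^-1 * h ^+ d * Qf w + h ^+ d * Ef r.
Proof. by []. Qed.

Lemma Q_expand w x w' t : (forall i l s, w' i l s = w i l s + t * x i l s) ->
  Qf w' = Qf w + t * Bf w x + t ^+ 2 * Qf x.
Proof.
move=> Hw; rewrite /Qf /Bf -sum4_lin; apply: eq_bigr => l _; apply: eq_bigr => s _.
apply: eq_bigr => i _; apply: eq_bigr => j _; rewrite !Hw; ring.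
Qed.

Lemma hat_pos (hrk : forall i l, 0 < rk i l) i l s : 0 < rh i l s.
Proof. rewrite /hat; have := hrk i l; have := hrk i (shiftp l s); lra. Qed.

Lemma hat_sum (hrk : forall l, \sum_(i < n) rk i l = 1) l s :
  \sum_(i < n) rh i l s = 1.
Proof. by rewrite /hat -mulr_suml big_split /= !hrk; field. Qed.

Lemma Q_ge0 (hb : forall i j, i != j -> 0 < b i j) (hrk : forall i l, 0 < rk i l) x :
  0 <= Qf x.
Proof.
apply: sumr_ge0 => l _; apply: sumr_ge0 => s _; apply: sumr_ge0 => i _;
  apply: sumr_ge0 => j _.
case: (eqVneq i j) => [->|ij]; first by rewrite subrr expr0n /= mulr0.
apply: mulr_ge0; last exact: sqr_ge0.
by apply/ltW/mulr_gt0; [apply/mulr_gt0|]; rewrite ?hb ?hat_pos.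
Qed.

Lemma E_upper r dr r' t : (forall i l, 0 < r i l) -> (forall i l, 0 < r' i l) ->
  (forall i l, r' i l = r i l + t * dr i l) ->
  Ef r' <= Ef r + t * (\sum_(l : cellT) \sum_(i < n) (ln (r i l) + 1) * dr i l)
           + t ^+ 2 * (\sum_(l : cellT) \sum_(i < n) dr i l ^+ 2 / r i l).
Proof.
move=> rp r'p Hr; rewrite /Ef -sum2_lin; apply: le_sum2 => l i.
have H := xlnx_upper (rp i l) (r'p i l).
rewrite Hr in H *.
have e : r i l + t * dr i l - r i l = t * dr i l by ring.
rewrite e in H; apply: (le_trans H).
rewrite le_eqVlt; apply/orP; left; apply/eqP; ring.
Qed.

Lemma E_lower r r' : (forall i l, 0 < r i l) -> (forall i l, 0 < r' i l) ->
  Ef r + (\sum_(l : cellT) \sum_(i < n) (ln (r i l) + 1) * (r' i l - r i l)) <= Ef r'.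
Proof.
move=> rp r'p; rewrite /Ef -big_split /=; apply: ler_sum => l _.
rewrite -big_split /=; apply: ler_sum => i _.
exact: xlnx_lower.
Qed.

Lemma swap_aux (hbs : forall i j, i != j -> b i j = b j i) (a w x : 'I_n -> R) :
  \sum_(i < n) \sum_(j < n) b i j * a i * a j * (w i - w j) * x j
  = - \sum_(i < n) \sum_(j < n) b i j * a i * a j * (w i - w j) * x i.
Proof.
rewrite exchange_big /= -sumrN; apply: eq_bigr => i _; rewrite -sumrN.
apply: eq_bigr => j _.
case: (eqVneq i j) => [->|ij]; first by ring.
rewrite (hbs _ _ ij); ring.
Qed.

Lemma sum_G_x (a w x : 'I_n -> R) :
  \sum_(i < n) \sum_(j < n) b i j * a i * a j * (w i - w j) * x i
  = \sum_(i < n) a i * x i * (\sum_(j < n) b i j * a j * (w i - w j)).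
Proof.
apply: eq_bigr => i _; rewrite mulr_sumr; apply: eq_bigr => j _; ring.
Qed.

Lemma swap_B (hbs : forall i j, i != j -> b i j = b j i) (a w x : 'I_n -> R) :
  \sum_(i < n) \sum_(j < n) b i j * a i * a j * (2 * (w i - w j) * (x i - x j))
  = 4 * \sum_(i < n) a i * x i * (\sum_(j < n) b i j * a j * (w i - w j)).
Proof.
transitivity (2 * (\sum_(i < n) \sum_(j < n) b i j * a i * a j * (w i - w j) * x i)
   - 2 * (\sum_(i < n) \sum_(j < n) b i j * a i * a j * (w i - w j) * x j)).
  rewrite !mulr_sumr -sumrB; apply: eq_bigr => i _.
  rewrite !mulr_sumr -sumrB; apply: eq_bigr => j _; ring.
rewrite swap_aux // sum_G_x; ring.
Qed.

Lemma swap_0 (hbs : forall i j, i != j -> b i j = b j i) (a w : 'I_n -> R) :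
  \sum_(i < n) a i * (\sum_(j < n) b i j * a j * (w i - w j)) = 0.
Proof.
have H := swap_aux hbs a w (fun _ => 1).
have e : forall X : R, X = - X -> X = 0 by move=> X; lra.
apply: (eq_trans _ (e _ H)).
apply: eq_bigr => i _; rewrite mulr_sumr; apply: eq_bigr => j _ /=; ring.
Qed.

Definition Lin r w (dr : 'I_n -> cellT -> R) (dw : 'I_n -> cellT -> 'I_d -> R) :=
  (4 * dt)^-1 * h ^+ d * Bf w dw
  + h ^+ d * (\sum_(l : cellT) \sum_(i < n) (ln (r i l) + 1) * dr i l).
Definition Quad (r dr : 'I_n -> cellT -> R) (dw : 'I_n -> cellT -> 'I_d -> R) :=
  (4 * dt)^-1 * h ^+ d * Qf dw
  + h ^+ d * (\sum_(l : cellT) \sum_(i < n) dr i l ^+ 2 / r i l).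
Definition Pf (r : 'I_n -> cellT -> R) (w : 'I_n -> cellT -> 'I_d -> R) i l s :=
  dt^-1 * (\sum_(j < n) b i j * rh j l s * (w i l s - w j l s))
  + Dh h (fun l' => ln (r i l')) l s.

Lemma J_upper (hdt : 0 < dt) (hh : 0 < h) r w dr dw r' w' t :
  (forall i l, 0 < r i l) -> (forall i l, 0 < r' i l) ->
  (forall i l, r' i l = r i l + t * dr i l) ->
  (forall i l s, w' i l s = w i l s + t * dw i l s) ->
  Jfun h dt b rk r' w' <= Jfun h dt b rk r w + t * Lin r w dr dw + t ^+ 2 * Quad r dr dw.
Proof.
move=> rp r'p Hr Hw; rewrite !J_eq (Q_expand Hw) /Lin /Quad.
have hd : 0 <= h ^+ d by rewrite exprn_ge0 // ltW.
have := E_upper rp r'p Hr => /(ler_wpM2l hd) H.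
lra.
Qed.

Lemma J_lower (hdt : 0 < dt) (hh : 0 < h)
  (hb : forall i j, i != j -> 0 < b i j) (hrk : forall i l, 0 < rk i l) r w r' w' :
  (forall i l, 0 < r i l) -> (forall i l, 0 < r' i l) ->
  Jfun h dt b rk r w + Lin r w (fun i l => r' i l - r i l)
                              (fun i l s => w' i l s - w i l s)
  <= Jfun h dt b rk r' w'.
Proof.
move=> rp r'p; rewrite !J_eq (@Q_expand w (fun i l s => w' i l s - w i l s) w' 1);
  last by move=> i l s; ring.
rewrite /Lin.
have hd : 0 <= h ^+ d by rewrite exprn_ge0 // ltW.
have c0 : 0 <= (4 * dt)^-1 * h ^+ d by rewrite mulr_ge0 // invr_ge0; lra.
have := E_lower rp r'p => /(ler_wpM2l hd) H.
have := Q_ge0 hb hrk (fun i l s => w' i l s - w i l s) => /(ler_wpM2l c0) H2.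
rewrite mulr0 in H2.
lra.
Qed.

Lemma Lin_P (hdt : 0 < dt) (hbs : forall i j, i != j -> b i j = b j i) r w dr dw :
  (forall i l, dr i l = - dh h (fun l' s => rh i l' s * dw i l' s) l) ->
  (forall l, \sum_(i < n) dr i l = 0) ->
  Lin r w dr dw = h ^+ d * \sum_(l : cellT) \sum_(s < d) \sum_(i < n)
                              rh i l s * dw i l s * Pf r w i l s.
Proof.
move=> Hdr Hsum.
have HB : Bf w dw = \sum_(l : cellT) \sum_(s < d) 4 * \sum_(i < n)
    rh i l s * dw i l s * (\sum_(j < n) b i j * rh j l s * (w i l s - w j l s)).
  apply: eq_bigr => l _; apply: eq_bigr => s _.
  exact: (swap_B hbs (fun i => rh i l s) (fun i => w i l s) (fun i => dw i l s)).
have HE : \sum_(l : cellT) \sum_(i < n) (ln (r i l) + 1) * dr i l =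
    \sum_(l : cellT) \sum_(s < d) \sum_(i < n)
      rh i l s * dw i l s * Dh h (fun l' => ln (r i l')) l s.
  transitivity (\sum_(l : cellT) \sum_(i < n) ln (r i l) * dr i l
                + \sum_(l : cellT) \sum_(i < n) dr i l).
    rewrite -big_split /=; apply: eq_bigr => l _.
    rewrite -big_split /=; apply: eq_bigr => i _; ring.
  rewrite [X in _ + X]big1 ?addr0; last by move=> l _; exact: Hsum.
  rewrite exchange_big /=.
  transitivity (\sum_(i < n) \sum_(l : cellT) \sum_(s < d)
      rh i l s * dw i l s * Dh h (fun l' => ln (r i l')) l s).
    apply: eq_bigr => i _.
    under eq_bigr do rewrite Hdr mulrN.
    rewrite sumrN sum_by_parts opprK.
    by apply: eq_bigr => l _; apply: eq_bigr => s _.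
  rewrite exchange_big /=; apply: eq_bigr => l _.
  by rewrite exchange_big.
rewrite /Lin HB HE.
have E4 : \sum_(l : cellT) \sum_(s < d) 4 * \sum_(i < n)
    rh i l s * dw i l s * (\sum_(j < n) b i j * rh j l s * (w i l s - w j l s))
  = 4 * \sum_(l : cellT) \sum_(s < d) \sum_(i < n)
    rh i l s * dw i l s * (\sum_(j < n) b i j * rh j l s * (w i l s - w j l s)).
  by rewrite mulr_sumr; apply: eq_bigr => l _; rewrite mulr_sumr.
rewrite E4.
have EP : \sum_(l : cellT) \sum_(s < d) \sum_(i < n) rh i l s * dw i l s * Pf r w i l s
  = \sum_(l : cellT) \sum_(s < d) \sum_(i < n)
      (rh i l s * dw i l s * Dh h (fun l' => ln (r i l')) l s
       + dt^-1 * (rh i l s * dw i l s * (\sum_(j < n) b i j * rh j l s * (w i l s - w j l s)))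
       + 0 * 0).
  apply: eq_bigr => l _; apply: eq_bigr => s _; apply: eq_bigr => i _.
  rewrite /Pf; ring.
rewrite EP sum3_lin.
have dt0 : dt != 0 by rewrite gt_eqF.
by field.
Qed.

Lemma away (hdt : 0 < dt) (hh : 0 < h)
  (hb : forall i j, i != j -> 0 < b i j) (hrk : forall i l, 0 < rk i l)
  (hrks : forall l, \sum_(i < n) rk i l = 1) (rmin d1 : R) (rm0 : 0 < rmin) (hrm : forall i l, rmin <= rk i l) (d10 : 0 < d1)
  (hd1 : rmin * ln d1 <= - (\sum_(l : cellT) \sum_(i < n) (1 : R) + 1)) r w :
  Feas r w -> (forall i l, 0 < r i l) ->
  (forall t, 0 < t -> t <= 1 ->
     Jfun h dt b rk r w <= Jfun h dt b rk (fun i l => r i l + t * (rk i l - r i l))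
                                  (fun i l s => w i l s + t * (0 - w i l s))) ->
  forall i l, d1 < r i l.
Proof.
move=> [F1 [F2 F3]] rp Hmin i0 l0.
have r1 : forall i l, r i l <= 1.
  move=> i l; rewrite -(F2 l); apply: (@single_le_sum _ _ (fun i => r i l)) => j.
  exact: ltW.
have Lin0 : 0 <= Lin r w (fun i l => rk i l - r i l) (fun i l s => 0 - w i l s).
  apply: (small_t_nonneg (c := Quad r (fun i l => rk i l - r i l)
                                    (fun i l s => 0 - w i l s)) ltr01) => t tp t1.
  have rp' : forall i l, 0 < r i l + t * (rk i l - r i l).
    by move=> i l; have := rp i l; have := hrk i l; nra.
  have := @J_upper hdt hh r w (fun i l => rk i l - r i l) (fun i l s => 0 - w i l s)
    (fun i l => r i l + t * (rk i l - r i l)) (fun i l s => w i l s + t * (0 - w i l s))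
    t rp rp' (fun i l => erefl) (fun i l s => erefl).
  have := Hmin t tp t1; lra.
have Bneg : Bf w (fun i l s => 0 - w i l s) <= 0.
  apply: sumr_le0 => l _; apply: sumr_le0 => s _; apply: sumr_le0 => i _;
    apply: sumr_le0 => j _.
  case: (eqVneq i j) => [->|ij]; first by rewrite subrr !(mul0r, mulr0).
  have P0 : 0 < b i j * rh i l s * rh j l s.
    by apply: mulr_gt0; [apply: mulr_gt0; [exact: hb | exact: hat_pos] | exact: hat_pos].
  have Q0 : 0 <= b i j * rh i l s * rh j l s * (w i l s - w j l s) ^+ 2.
    by rewrite mulr_ge0 ?sqr_ge0 ?ltW.
  have -> : b i j * rh i l s * rh j l s *
      (2 * (w i l s - w j l s) * (0 - w i l s - (0 - w j l s)))
      = - (2 * (b i j * rh i l s * rh j l s * (w i l s - w j l s) ^+ 2)) by ring.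
  lra.
have hd : 0 < h ^+ d by rewrite exprn_gt0.
have c0 : 0 <= (4 * dt)^-1 * h ^+ d by rewrite mulr_ge0 // ?invr_ge0 ?ltW //; lra.
have S0 : 0 <= \sum_(l : cellT) \sum_(i < n) (ln (r i l) + 1) * (rk i l - r i l).
  move: Lin0; rewrite /Lin => Lin0.
  have : (4 * dt)^-1 * h ^+ d * Bf w (fun i l s => 0 - w i l s) <= 0.
    by rewrite mulr_ge0_le0.
  move=> H1.
  have : 0 <= h ^+ d * (\sum_(l : cellT) \sum_(i < n)
                           (ln (r i l) + 1) * (rk i l - r i l)) by lra.
  by rewrite pmulr_rge0.
have S1 : \sum_(l : cellT) \sum_(i < n) (ln (r i l) + 1) * (rk i l - r i l)
          = \sum_(l : cellT) \sum_(i < n) ln (r i l) * (rk i l - r i l).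
  apply: eq_bigr => l _.
  transitivity (\sum_(i < n) ln (r i l) * (rk i l - r i l)
                + \sum_(i < n) (rk i l - r i l)).
    by rewrite -big_split; apply: eq_bigr => i _ /=; ring.
  by rewrite sumrB F2 hrks subrr addr0.
rewrite S1 in S0.
rewrite ltNge; apply/negP => r0le.
have bnd : \sum_(l : cellT) \sum_(i < n) ln (r i l) * (rk i l - r i l)
   <= \sum_(l : cellT) \sum_(i < n) (1 : R)
      + \sum_(l : cellT) \sum_(i < n) rk i l * ln (r i l).
  rewrite -big_split /=; apply: ler_sum => l _; rewrite -big_split /=.
  apply: ler_sum => i _; have := mxlnx_le1 (rp i l); lra.
have tle0 : forall i l, rk i l * ln (r i l) <= 0.
  by move=> i l; apply: mulr_ge0_le0; [exact: ltW | exact: ln_le0].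
have b2 : \sum_(l : cellT) \sum_(i < n) rk i l * ln (r i l)
          <= rk i0 l0 * ln (r i0 l0).
  have := @sum_le_single _ _ (fun l => \sum_(i < n) rk i l * ln (r i l)) l0.
  move=> /(_ (fun l => sumr_le0 _ (fun i _ => tle0 i l))) H.
  apply: (le_trans H).
  have := @sum_le_single _ _ (fun i => rk i l0 * ln (r i l0)) i0.
  by apply=> i; exact: tle0.
have lnr0 : ln (r i0 l0) <= ln d1 by rewrite ler_ln ?posrE.
have lnle0 : ln (r i0 l0) <= 0 := ln_le0 (r1 i0 l0).
have hm := hrm i0 l0.
have e1 : rk i0 l0 * ln (r i0 l0) <= rmin * ln (r i0 l0) by nra.
have e2 : rmin * ln (r i0 l0) <= rmin * ln d1 by rewrite ler_wpM2l // ltW.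
lra.
Qed.

Lemma stat (hdt : 0 < dt) (hh : 0 < h) (delta : R) r w :
  0 < delta -> (forall i l, delta < r i l) -> Feas r w ->
  (forall r' w', (forall i l, delta <= r' i l) -> Feas r' w' ->
     Jfun h dt b rk r w <= Jfun h dt b rk r' w') ->
  forall dr dw, Ker dr dw -> Lin r w dr dw = 0.
Proof.
move=> dp rd F Hmin dr dw K.
have [eps [ep Heps]] := @pos_lb _ _ _ (fun i l => r i l - delta)
  (fun i l => ltac:(have := rd i l; lra)).
set B := 1 + \sum_(i < n) \sum_(l : cellT) `|dr i l|.
have hB : forall i l, `|dr i l| <= B.
  move=> i l; rewrite /B.
  have := @single_le_sum _ _ (fun i => \sum_(l : cellT) `|dr i l|) i.
  move=> /(_ (fun i => sumr_ge0 _ (fun l _ => normr_ge0 (dr i l)))) H1.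
  have := @single_le_sum _ _ (fun l => `|dr i l|) l (fun l => normr_ge0 _).
  lra.
have B0 : 0 < B.
  have : 0 <= \sum_(i < n) \sum_(l : cellT) `|dr i l|.
    by apply: sumr_ge0 => i _; apply: sumr_ge0 => l _; exact: normr_ge0.
  rewrite /B; lra.
apply: (@small_t_zero _ (eps / B) _ (Quad r dr dw)); first exact: divr_gt0.
move=> t Ht.
have rt : forall i l, delta <= r i l + t * dr i l.
  move=> i l.
  have h1 : `|t * dr i l| <= eps / B * B.
    rewrite normrM; apply: ler_pM => //; exact: hB.
  have h2 : eps / B * B = eps by field; rewrite gt_eqF.
  have h3 := ler_norm (- (t * dr i l)); rewrite normrN in h3.
  have := Heps i l; lra.
have rp : forall i l, 0 < r i l by move=> i l; have := rd i l; lra.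
have rp' : forall i l, 0 < r i l + t * dr i l.
  by move=> i l; have := rt i l; lra.
have := @J_upper hdt hh r w dr dw (fun i l => r i l + t * dr i l)
    (fun i l s => w i l s + t * dw i l s) t rp rp' (fun i l => erefl) (fun i l s => erefl).
have := Hmin _ _ rt (feas_move t F K).
lra.
Qed.

Definition dwloc (i0 j0 : 'I_n) (l0 : cellT) (s0 : 'I_d) i l s :=
  if (l == l0) && (s == s0)
  then (i == i0)%:R / rh i0 l0 s0 - (i == j0)%:R / rh j0 l0 s0 else 0.

Lemma local_P (hdt : 0 < dt) (hh : 0 < h) (hbs : forall i j, i != j -> b i j = b j i)
  (hrk : forall i l, 0 < rk i l) r w :
  (forall dr dw, Ker dr dw -> Lin r w dr dw = 0) ->
  forall i0 j0 l0 s0, Pf r w i0 l0 s0 = Pf r w j0 l0 s0.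
Proof.
move=> H i0 j0 l0 s0.
set dw := dwloc i0 j0 l0 s0.
set dr := fun i l => - dh h (fun l' s => rh i l' s * dw i l' s) l.
have r0 : rh i0 l0 s0 != 0 by rewrite gt_eqF // hat_pos.
have r1 : rh j0 l0 s0 != 0 by rewrite gt_eqF // hat_pos.
have K3 : forall l s, \sum_(i < n) rh i l s * dw i l s = 0.
  move=> l s; rewrite /dw /dwloc.
  case E: ((l == l0) && (s == s0)); last by rewrite big1 // => i _; rewrite mulr0.
  move/andP: E => [/eqP El /eqP Es]; subst l s.
  transitivity (\sum_(i < n) (i == i0)%:R * (rh i l0 s0 / rh i0 l0 s0)
              - \sum_(i < n) (i == j0)%:R * (rh i l0 s0 / rh j0 l0 s0)).
    by rewrite -sumrB; apply: eq_bigr => i _; ring.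
  by rewrite !sum_ind !mulfV // subrr.
have K : Ker dr dw.
  split; [|split].
  - by move=> i l; rewrite /dr addNr.
  - move=> l; rewrite /dr sumrN dh_sum.
    by rewrite (@dh_ext _ _ _ _ _ (fun _ _ => 0)) ?dh0 ?oppr0 // => l' s; exact: K3.
  - exact: K3.
have := H dr dw K.
rewrite (@Lin_P hdt hbs r w dr dw (fun i l => erefl) K.2.1).
have Z : forall l s, ~~ ((l == l0) && (s == s0)) ->
    \sum_(i < n) rh i l s * dw i l s * Pf r w i l s = 0.
  move=> l s ne; rewrite big1 // => i _; rewrite /dw /dwloc (negbTE ne).
  by rewrite mulr0 mul0r.
rewrite (bigD1 l0) //= [X in _ + X]big1 ?addr0; last first.
  move=> l ne; apply: big1 => s _; apply: Z; by rewrite (negbTE ne).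
rewrite (bigD1 s0) //= [X in _ + X]big1 ?addr0; last first.
  move=> s ne; apply: Z; by rewrite eqxx (negbTE ne).
have -> : \sum_(i < n) rh i l0 s0 * dw i l0 s0 * Pf r w i l0 s0
   = \sum_(i < n) (i == i0)%:R * (rh i l0 s0 / rh i0 l0 s0 * Pf r w i l0 s0)
   - \sum_(i < n) (i == j0)%:R * (rh i l0 s0 / rh j0 l0 s0 * Pf r w i l0 s0).
  rewrite -sumrB; apply: eq_bigr => i _; rewrite /dw /dwloc !eqxx /=; ring.
rewrite !sum_ind !mulfV // !mul1r.
have hd : 0 < h ^+ d by rewrite exprn_gt0.
move/eqP; rewrite mulf_eq0 (gt_eqF hd) /= subr_eq0 => /eqP //.
Qed.

End Model.

Theorem theoremA1 (R : realType) (d n N : nat) (L dt : R)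
  (b : 'I_n -> 'I_n -> R) (rk : 'I_n -> cell d N -> R) :
  (1 <= d)%N -> (2 <= n)%N -> (1 <= N)%N -> 0 < L -> 0 < dt ->
  (forall i j : 'I_n, i != j -> 0 < b i j) ->
  (forall i j : 'I_n, i != j -> b i j = b j i) ->
  (forall i l, 0 < rk i l) ->
  (forall l, \sum_(i < n) rk i l = 1) ->
  let h := L / N%:R in
  exists delta0 : R, 0 < delta0 /\
    forall delta : R, 0 < delta -> delta <= delta0 ->
    forall r1 : 'I_n -> cell d N -> R, (forall i l, 0 < r1 i l) ->
      (scheme_solution h dt b rk r1 <->
       exists w, is_minimizer h dt b rk delta r1 w).
Proof.
move=> hd1 hn2 hN1 hL hdt hb hbs hrk hrks h.
have hh : 0 < h by rewrite /h divr_gt0 // ltr0n.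
have [rmin [rm0 hrm]] := @pos_lb _ _ _ (fun i l => rk i l) hrk.
set M := \sum_(l : cell d N) \sum_(i < n) (1 : R).
set d1 := expR (- (M + 1) / rmin).
have d10 : 0 < d1 := expR_gt0 _.
have hdd1 : rmin * ln d1 <= - (M + 1).
  rewrite /d1 expRK; have -> : rmin * (- (M + 1) / rmin) = - (M + 1).
    by field; rewrite gt_eqF.
  exact: lexx.
have FRk := feas_rk h hrks.
exists (Num.min d1 rmin); split; first by rewrite lt_min d10 rm0.
move=> delta dp dle r1 r1p.
have dd1 : delta <= d1 by move: dle; rewrite le_min => /andP[].
have drm : delta <= rmin by move: dle; rewrite le_min => /andP[].
split.
- move=> [v [E1 [E2 E3]]].
  set w := fun i l s => dt * v i l s.
  have F1 : forall i l, r1 i l - rk i l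
      + dh h (fun l' s => hat (rk i) l' s * w i l' s) l = 0.
    move=> i l.
    rewrite (@dh_ext _ _ _ _ _ (fun l' s => dt * (hat (rk i) l' s * v i l' s)
              + 0 * (hat (rk i) l' s * v i l' s))); last by move=> l' s; rewrite /w; ring.
    rewrite dh_lin2.
    have e : dh h (fun l' s => hat (rk i) l' s * v i l' s) l
             = - ((r1 i l - rk i l) / dt) by have := E1 i l; lra.
    by rewrite e; field; rewrite gt_eqF.
  have F3 : forall l s, \sum_(i < n) hat (rk i) l s * w i l s = 0.
    move=> l s; rewrite /w.
    under eq_bigr do rewrite mulrCA.
    by rewrite -mulr_sumr E3 mulr0.
  have F2 : forall l, \sum_(i < n) r1 i l = 1.
    move=> l.
    have : \sum_(i < n) (r1 i l - rk i l) = 0.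
      transitivity (\sum_(i < n) - dh h (fun l' s => hat (rk i) l' s * w i l' s) l).
        by apply: eq_bigr => i _; have := F1 i l; lra.
      rewrite sumrN dh_sum.
      by rewrite (@dh_ext _ _ _ _ _ (fun _ _ => 0)) ?dh0 ?oppr0 // => l' s; exact: F3.
    rewrite sumrB hrks; lra.
  have F : Feas h rk r1 w by split; [exact: F1 | split; [exact: F2 | exact: F3]].
  set A := fun l s => (\sum_(j < n) hat (rk j) l s * Dh h (fun l' => ln (r1 j l')) l s)
           / (\sum_(j < n) hat (rk j) l s).
  have PC : forall i l s, Pf h dt b rk r1 w i l s = A l s.
    move=> i l s; rewrite /Pf.
    have -> : \sum_(j < n) b i j * hat (rk j) l s * (w i l s - w j l s)
        = dt * \sum_(j < n) b i j * hat (rk j) l s * (v i l s - v j l s).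
      by rewrite mulr_sumr; apply: eq_bigr => j _; rewrite /w; ring.
    rewrite mulKf ?gt_eqF //.
    have := E2 i l s; rewrite /A; lra.
  have Hmin0 : forall r' w', (forall i l, 0 < r' i l) -> Feas h rk r' w' ->
      Jfun h dt b rk r1 w <= Jfun h dt b rk r' w'.
    move=> r' w' r'p F'.
    have K := ker_diff F F'.
    have := J_lower hdt hh hb hrk w w' r1p r'p.
    have K1' : forall i l, r' i l - r1 i l = - dh h (fun l' s => hat (rk i) l' s *
                   (w' i l' s - w i l' s)) l.
      by move=> i l; have := K.1 i l; lra.
    rewrite (@Lin_P _ _ _ h _ dt b rk hdt hbs r1 w _ _ K1' K.2.1).
    rewrite big1 ?mulr0 ?addr0 // => l _; apply: big1 => s _.
    transitivity (A l s * \sum_(i < n) hat (rk i) l s * (w' i l s - w i l s)).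
      by rewrite mulr_sumr; apply: eq_bigr => i _; rewrite PC; ring.
    by rewrite K.2.2 mulr0.
  have Haway : forall i l, d1 < r1 i l.
    apply: (away hdt hh hb hrk hrks rm0 hrm d10 hdd1 F r1p) => t tp t1.
    apply: Hmin0; last exact: (feas_move t F (ker_diff F FRk)).
    by move=> i l; have := r1p i l; have := hrk i l; nra.
  exists w; split.
    split; last exact: F.
    by move=> i l; apply: ltW; apply: le_lt_trans dd1 (Haway i l).
  move=> r' w' [Hd' F']; apply: Hmin0 => // i l.
  by apply: lt_le_trans dp (Hd' i l).
- move=> [w [[Hd F] Hmin]].
  have Hmin' : forall r' w', (forall i l, delta <= r' i l) -> Feas h rk r' w' ->
      Jfun h dt b rk r1 w <= Jfun h dt b rk r' w'.
    by move=> r' w' a c; apply: Hmin; split.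
  have Haway : forall i l, d1 < r1 i l.
    apply: (away hdt hh hb hrk hrks rm0 hrm d10 hdd1 F r1p) => t tp t1.
    apply: Hmin'; last exact: (feas_move t F (ker_diff F FRk)).
    move=> i l; have := Hd i l; have := hrm i l; nra.
  have rd : forall i l, delta < r1 i l.
    by move=> i l; apply: le_lt_trans dd1 (Haway i l).
  have L0 := stat hdt hh dp rd F Hmin'.
  have PC := local_P hdt hh hbs hrk L0.
  exists (fun i l s => dt^-1 * w i l s); split; [|split].
  + move=> i l.
    rewrite (@dh_ext _ _ _ _ _ (fun l' s => dt^-1 * (hat (rk i) l' s * w i l' s)
              + 0 * (hat (rk i) l' s * w i l' s))); last by move=> l' s; ring.
    rewrite dh_lin2.
    have e : dh h (fun l' s => hat (rk i) l' s * w i l' s) l = - (r1 i l - rk i l).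
      by have := F.1 i l; lra.
    by rewrite e; field; rewrite gt_eqF.
  + move=> i l s.
    have hS : \sum_(j < n) b i j * hat (rk j) l s * (dt^-1 * w i l s - dt^-1 * w j l s)
        = dt^-1 * \sum_(j < n) b i j * hat (rk j) l s * (w i l s - w j l s).
      by rewrite mulr_sumr; apply: eq_bigr => j _; ring.
    have Z := swap_0 hbs (fun j => hat (rk j) l s) (fun j => w j l s); simpl in Z.
    have hD : \sum_(j < n) hat (rk j) l s * Dh h (fun l' => ln (r1 j l')) l s
              = Pf h dt b rk r1 w i l s.
      transitivity (\sum_(j < n) hat (rk j) l s * Pf h dt b rk r1 w j l s
         - dt^-1 * \sum_(j < n) hat (rk j) l s *
               (\sum_(k < n) b j k * hat (rk k) l s * (w j l s - w k l s))).
        by rewrite mulr_sumr -sumrB; apply: eq_bigr => j _; rewrite /Pf; ring.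
      rewrite Z mulr0 subr0.
      under eq_bigr => j _ do rewrite (PC j i l s).
      by rewrite -mulr_suml hat_sum // mul1r.
    rewrite hat_sum // divr1 hD hS /Pf; ring.
  + move=> l s.
    under eq_bigr do rewrite mulrCA.
    by rewrite -mulr_sumr F.2.2 mulr0.
Qed.
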